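(* Let $S \subseteq \mathbb{R}^n$ be nonempty, closed and convex, and let $F = (F_1,\dots,F_m)^\top\colon S \to\mathbb{R}^m$ with each $F_i$ convex. For $\ell > 0$ define $u_\ell(x) := \max_{y \in S}\min_{i=1,\dots,m}\{F_i(x) - F_i(y) - \frac{\ell}{2}\|x-y\|^2\}$, $x\in S$. Let $\ell>0$ and let $r$ be any scalar with $r \ge \ell$. Then \[ u_r(x) \le u_\ell(x) \le \frac{r}{\ell} u_r(x) \quad \text{for all } x \in S. \] *)

(* Defs.v *)
From HB Require Import structures.
From mathcomp Require Import all_boot all_order all_algebra.
From mathcomp Require Import all_classical all_reals all_analysis.
Set Implicit Arguments. Unset Strict Implicit. Unset Printing Implicit Defensive.
Import Order.TTheory GRing.Theory Num.Theory.
Local Open Scope classical_set_scope.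
Local Open Scope ring_scope.

Definition sqdist (R : realType) (n : nat) (x y : 'rV[R]_n) : R :=
  \sum_(i < n) (x ord0 i - y ord0 i) ^+ 2.

Definition convex_on (R : realType) (n : nat) (S : set 'rV[R]_n)
  (f : 'rV[R]_n -> R) : Prop :=
  forall x y (t : R), S x -> S y -> 0 <= t <= 1 ->
    f (t *: x + (1 - t) *: y) <= t * f x + (1 - t) * f y.

(* min_{i=1..m} g i  (for m > 0, the infimum of a finite nonempty set is its minimum) *)
Definition minI (R : realType) (m : nat) (g : 'I_m -> R) : R := inf (range g).

Definition u (R : realType) (n m : nat) (S : set 'rV[R]_n)
  (F : 'I_m -> 'rV[R]_n -> R) (l : R) (x : 'rV[R]_n) : R :=
  sup [set minI (fun i => F i x - F i y - l / 2 * sqdist x y) | y in S].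

(* Main.v *)
Require Import Defs.
From HB Require Import structures.
From mathcomp Require Import all_boot all_order all_algebra.
From mathcomp Require Import all_classical all_reals all_analysis.
From mathcomp Require Import ring lra.
Import Order.TTheory GRing.Theory Num.Theory numFieldNormedType.Exports.
Local Open Scope classical_set_scope.
Local Open Scope ring_scope.

Lemma minI_le (R : realType) (m : nat) (g : 'I_m -> R) i : minI g <= g i.
Proof.
rewrite /minI; apply: ge_inf; last by exists i.
exists (- \sum_(j < m) `|g j|) => _ [k _ <-].
rewrite lerNl (bigD1 k) //= -[X in X <= _]addr0.
apply: lerD; first by rewrite -normrN ler_norm.
by apply: sumr_ge0 => j _.
Qed.

Lemma le_minI (R : realType) (m : nat) (hm : (0 < m)%N) (g : 'I_m -> R) c :
  (forall i, c <= g i) -> c <= minI g.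
Proof.
move=> H; rewrite /minI; apply: lb_le_inf.
  by exists (g (Ordinal hm)), (Ordinal hm).
by move=> _ [k _ <-].
Qed.

Lemma sqdist_ge0 (R : realType) n (x y : 'rV[R]_n) : 0 <= sqdist x y.
Proof. by apply: sumr_ge0 => j _; rewrite sqr_ge0. Qed.

Lemma sqdist_seg (R : realType) n (x y : 'rV[R]_n) t :
  sqdist x (t *: y + (1 - t) *: x) = t ^+ 2 * sqdist x y.
Proof.
rewrite /sqdist mulr_sumr; apply: eq_bigr => j _; rewrite !mxE.
by ring.
Qed.

Theorem corollary4p3 (R : realType) (n m : nat) (hm : (0 < m)%N)
  (S : set 'rV[R]_n) (F : 'I_m -> 'rV[R]_n -> R)
  (hSne : S !=set0) (hScl : closed S) (hScv : convex_set S)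
  (hF : forall i, convex_on S (F i))
  (l r : R) (hl : 0 < l) (hlr : l <= r) :
  forall x, S x -> u S F r x <= u S F l x <= r / l * u S F r x.
Proof.
move=> x Sx.
have hr : 0 < r by apply: lt_le_trans hlr.
set phi := fun (k : R) (y : 'rV[R]_n) =>
  minI (fun i => F i x - F i y - k / 2 * sqdist x y).
set E := fun k => [set phi k y | y in S].
have -> : u S F r x = sup (E r) by [].
have -> : u S F l x = sup (E l) by [].
have Ene : forall k, E k !=set0 by move=> k; exists (phi k x), x.
have cmp1 : forall y, phi r y <= phi l y.
  move=> y; apply: le_minI => // i.
  rewrite /phi; apply: le_trans; first exact: minI_le.
  rewrite lerD2l lerN2; apply: ler_wpM2r; first exact: sqdist_ge0.
  by rewrite ler_pM2r.
have cmp2 : forall y, S y -> exists2 z, S z & phi l y <= r / l * phi r z.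
  move=> y Sy; set t := l / r.
  have t0 : 0 <= t by rewrite divr_ge0 // ltW.
  have t1 : t <= 1 by rewrite ler_pdivrMr // mul1r.
  have rt : r * t = l by rewrite /t mulrC divfK // gt_eqF.
  have tpos : 0 < t by rewrite divr_gt0.
  exists (t *: y + (1 - t) *: x).
    have := hScv y x (Itv01 t0 t1); rewrite !inE; apply => //.
  have key : t * phi l y <= phi r (t *: y + (1 - t) *: x).
    apply: le_minI => // i.
    have c1 := hF i y x t Sy Sx (introT andP (conj t0 t1)).
    have c2 : phi l y <= F i x - F i y - l / 2 * sqdist x y by apply: minI_le.
    rewrite sqdist_seg.
    have d0 := @sqdist_ge0 _ _ x y.
    set d := sqdist x y in c2 d0 *.
    set fz := F i (t *: y + (1 - t) *: x) in c1 *.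
    have e : r / 2 * (t ^+ 2 * d) = t * (l / 2 * d).
      by rewrite -rt; ring.
    rewrite e.
    have c3 := ler_wpM2l t0 c2.
    nra.
  have -> : phi l y = r / l * (t * phi l y).
    by rewrite mulrA /t mulrA divfK ?gt_eqF // divff ?gt_eqF // mul1r.
  by apply: ler_wpM2l => //; rewrite divr_ge0 // ltW.
case: (pselect (has_ubound (E r))) => [ub|nub].
  have hsr : has_sup (E r) by split.
  have bnd : ubound (E l) (r / l * sup (E r)).
    move=> _ [y Sy <-]; have [z Sz hz] := cmp2 y Sy.
    apply: le_trans hz _; apply: ler_wpM2l; first by rewrite divr_ge0 // ltW.
    by apply: sup_upper_bound => //; exists z.
  have hsl : has_sup (E l) by split; [exact: Ene | exists (r / l * sup (E r))].
  apply/andP; split; last exact: ge_sup.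
  apply: ge_sup => // _ [y Sy <-].
  apply: le_trans (cmp1 y) _; apply: sup_upper_bound => //; by exists y.
have nsl : ~ has_sup (E l).
  case=> _ [b hb]; apply: nub; exists b => _ [y Sy <-].
  apply: le_trans (cmp1 y) _; apply: hb; by exists y.
have nsr : ~ has_sup (E r) by case.
by rewrite !sup_out // mulr0 lexx.
Qed.
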